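(* Let $H=(V,E)$ be an $n$-uniform hypergraph, $r\ge 2$, let $A\in E$ and let $2\le k\le r$. The number of sequences $(C_1,\dots,C_{k-1})$ of edges of $H$ for which there exist an injective $\sigma:V\to[0,1)$ and sets $V_i\subseteq\Delta_i$ ($i=1,\dots,r-1$) such that $(C_1,\dots,C_{k-1},A)$ is a $k$-complex ordered chain is at most $2\binom{|E|}{k-1}$.
   Context: Colors are $\{1,\dots,r\}$. Put $p=\frac{r-1}{r}\cdot\frac{\ln(n/\ln n)}{n}$. Partition $[0,1)$ into consecutive half-open intervals $\Delta_1,\delta_1,\Delta_2,\dots,\delta_{r-1},\Delta_r$ (left to right), $\Delta_i=\big[(i-1)(\tfrac{1-p}{r}+\tfrac{p}{r-1}),\ i\tfrac{1-p}{r}+(i-1)\tfrac{p}{r-1}\big)$, $\delta_i=\big[i\tfrac{1-p}{r}+(i-1)\tfrac{p}{r-1},\ i(\tfrac{1-p}{r}+\tfrac{p}{r-1})\big)$. For injective $\sigma:V\to[0,1)$, a vertex $v$ belongs to interval $I$ if $\sigma(v)\in I$ (and $\Delta_i$ also denotes the set of vertices belonging to it); the first (last) vertex of a vertex set is its vertex of smallest (largest) weight. Algorithm 1: every vertex in $\Delta_i$ gets color $i$; then vertices in $\bigcup_i\delta_i$ are processed in increasing weight order, and $v\in\delta_i$ gets color $i$ unless some edge containing $v$ has all its other vertices already colored $i$, in which case $v$ gets color $i+1$; the result is $C^0$. For $1\le k\le r$, a sequence $(C_1,\dots,C_{k-1},D)$ with $C_j$ edges and $D$ a nonempty vertex set satisfies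 the ordered $k$-chain conditions for color $r$ if: (a) the first vertex of $C_1$ (of $D$ if $k=1$) lies in $\Delta_{r-k+1}$; (b) for each $j=1,\dots,k-1$, with $C_k:=D$, the last vertex of $C_j$ equals the first vertex of $C_{j+1}$, lies in $\delta_{r-k+j}$, and all other vertices of $C_j$ have color $r-k+j$ in $C^0$; (c) all vertices of $D$ have color $r$ in $C^0$. Given sets $V_i\subseteq\Delta_i$, $i=1,\dots,r-1$, and $k\ge2$, a sequence $(C_1,\dots,C_{k-1},A)$ of edges is a $k$-complex ordered chain if, with $A'=A\cap(\delta_{r-1}\cup\Delta_r)$ (vertices of $A$ belonging to $\delta_{r-1}\cup\Delta_r$): (1) $(C_1,\dots,C_{k-1},A')$ satisfies the ordered $k$-chain conditions for color $r$; (2) every vertex of $A\setminus A'$ lies in $\bigcup_{i=1}^{r-1}V_i$; (3) for $j=1,\dots,k-2$, every vertex of $A\cap C_j$ lies in $V_{r-k+j}$; (4) every vertex of $(A\setminus A')\cap C_{k-1}$ lies in $V_{r-1}$. *)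

(* Defs.v *)
From mathcomp Require Import all_boot.
From Stdlib Require Import Reals.

Set Implicit Arguments.
Unset Strict Implicit.
Unset Printing Implicit Defensive.

Definition Rleb (x y : R) : bool := if Rle_dec x y then true else false.
Definition Rltb (x y : R) : bool := if Rlt_dec x y then true else false.
Definition in_int (a b x : R) : bool := Rleb a x && Rltb x b.

Section Algo.
Variables (V : finType) (E : {set {set V}}) (r n : nat) (sigma : V -> R).

Local Open Scope R_scope.
Definition pval : R :=
  ((INR r - 1) / INR r * (ln (INR n / ln (INR n)) / INR n))%R.
Definition aa : R := ((1 - pval) / INR r)%R.
Definition bb : R := (pval / (INR r - 1))%R.

Definition DeltaL (i : nat) : R := ((INR i - 1) * (aa + bb))%R.
Definition DeltaR (i : nat) : R := (INR i * aa + (INR i - 1) * bb)%R.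
Definition deltaL (i : nat) : R := DeltaR i.
Definition deltaR (i : nat) : R := (INR i * (aa + bb))%R.

Definition inDelta (i : nat) (v : V) : bool := in_int (DeltaL i) (DeltaR i) (sigma v).
Definition insmall (i : nat) (v : V) : bool := in_int (deltaL i) (deltaR i) (sigma v).

Local Close Scope R_scope.
Definition isSmall (v : V) : bool := has (fun i => insmall i v) (iota 1 (r - 1)).
Definition smallIdx (v : V) : nat := head 0 [seq i <- iota 1 (r - 1) | insmall i v].

(* Algorithm 1.  Colours are 1..r; 0 means "not (yet) coloured".
   Initially every vertex of Delta_i gets colour i. *)
Definition col_init (v : V) : nat := head 0 [seq i <- iota 1 r | inDelta i v].

Definition newcol (c : V -> nat) (v : V) : nat :=
  let i := smallIdx v in
  if [exists e in E, (v \in e) && [forall u in e, (u != v) ==> (c u == i)]]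
  then i.+1 else i.

Definition step (c : V -> nat) (v : V) : V -> nat :=
  fun u => if u == v then newcol c v else c u.

Definition small_order : seq V :=
  sort (fun u v => Rleb (sigma u) (sigma v)) [seq v <- enum V | isSmall v].

Definition C0 : V -> nat := foldl step col_init small_order.

Definition isFirst (S : {set V}) (v : V) : Prop :=
  v \in S /\ forall u, u \in S -> (sigma v <= sigma u)%R.
Definition isLast (S : {set V}) (v : V) : Prop :=
  v \in S /\ forall u, u \in S -> (sigma u <= sigma v)%R.

(* ordered k-chain conditions for colour r, for k >= 2:
   C j (j = 1..k-1) are the edges C_1..C_{k-1}, D is the final vertex set. *)
Definition ordered_chain (k : nat) (C : nat -> {set V}) (D : {set V}) : Prop :=
  let Cx := fun j => if j == k then D else C j in
  (D != set0) /\
  (exists v, isFirst (C 1) v /\ inDelta (r - k + 1) v) /\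
  (forall j, (1 <= j <= k - 1)%N ->
     exists v, isLast (Cx j) v /\ isFirst (Cx j.+1) v /\ insmall (r - k + j) v /\
       forall u, u \in Cx j -> u != v -> C0 u = (r - k + j)%N) /\
  (forall u, u \in D -> C0 u = r).

Definition Aprime (A : {set V}) : {set V} :=
  [set v in A | insmall (r - 1) v || inDelta r v].

Definition complex_chain (k : nat) (C : nat -> {set V}) (A : {set V})
  (Vs : nat -> {set V}) : Prop :=
  let A' := Aprime A in
  ordered_chain k C A' /\
  (forall v, v \in A :\: A' -> exists2 i, (1 <= i <= r - 1)%N & v \in Vs i) /\
  (forall j, (1 <= j <= k - 2)%N -> forall v, v \in A :&: C j -> v \in Vs (r - k + j)%N) /\
  (forall v, v \in (A :\: A') :&: C (k - 1) -> v \in Vs (r - 1)%N).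

End Algo.

(* Main.v *)
From Pilot Require Import Defs.
From mathcomp Require Import all_boot.
From Stdlib Require Import Reals.
From Stdlib Require Import Lra.

Section Comb.
Variable V : finType.

Definition PL (s : seq {set V}) : Prop :=
 (forall i j, (i < j)%N -> (j < size s)%N -> nth set0 s i != nth set0 s j) /\
 (forall i, (i.+1 < size s)%N -> nth set0 s i :&: nth set0 s i.+1 != set0) /\
 (forall i j, (i.+1 < j)%N -> (j < size s)%N -> nth set0 s i :&: nth set0 s j = set0).

Lemma PL_start s s' : PL s -> PL s' -> size s = size s' -> s =i s' ->
  nth set0 s 0 = nth set0 s' 0 -> s = s'.
Proof.
move=> [D [C J]] [D' [C' J']] Hsz Hmem H0.
have key : forall i l, (l <= i)%N -> (l < size s)%N -> nth set0 s l = nth set0 s' l.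
  elim=> [|i IH] l.
    by rewrite leqn0 => /eqP ->.
  rewrite leq_eqVlt => /orP [/eqP -> Hl|]; last by rewrite ltnS; apply: IH.
  set x := nth set0 s' i.+1.
  have xs : x \in s by rewrite Hmem mem_nth // -Hsz.
  have jl : (index x s < size s)%N by rewrite index_mem.
  have nj : nth set0 s (index x s) = x by apply: nth_index.
  case: (ltngtP (index x s) i.+1) => Hj.
  - have := IH (index x s); rewrite -ltnS => /(_ Hj jl); rewrite nj => Hx.
    have := D' _ _ Hj; rewrite -Hsz => /(_ Hl); by rewrite -Hx eqxx.
  - have := J _ _ Hj jl; rewrite nj (IH i (leqnn _)) ?(ltn_trans _ Hl) //.
    move=> Hc; have := C' i; rewrite -Hsz => /(_ Hl); by rewrite Hc eqxx.
  - by rewrite -nj Hj.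
apply: (@eq_from_nth _ set0) => // l Hl.
exact: (key l l (leqnn _) Hl).
Qed.

Lemma PL_end s s' : PL s -> PL s' -> size s = size s' -> s =i s' -> (0 < size s)%N ->
  nth set0 s' 0 \in [set nth set0 s 0; nth set0 s (size s).-1].
Proof.
move=> [D [C J]] [D' [C' J']] Hsz Hmem Hpos.
set x := nth set0 s' 0.
have xs : x \in s by rewrite Hmem mem_nth // -Hsz.
have jl : (index x s < size s)%N by rewrite index_mem.
have nj : nth set0 s (index x s) = x by apply: nth_index.
set j := index x s in jl nj.
rewrite !inE.
case: (posnP j) => [j0|jp]; first by rewrite -nj j0 eqxx.
case: (ltnP j (size s).-1) => Hj; last first.
  have Ej : j = (size s).-1 by apply/eqP; rewrite eqn_leq Hj andbT -ltnS (prednK Hpos).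
  by rewrite -nj Ej eqxx orbT.
exfalso.
have Hjs : (j.+1 < size s)%N by rewrite -(prednK Hpos) ltnS.
set y1 := nth set0 s j.-1.
set y2 := nth set0 s j.+1.
have I1 : y1 :&: x != set0 by have := C j.-1; rewrite prednK // -nj; apply; exact: ltn_trans Hjs.
have I2 : x :&: y2 != set0 by rewrite -nj; apply: C.
have y1s : y1 \in s' by rewrite -Hmem mem_nth // (leq_ltn_trans (leq_pred _) jl).
have y2s : y2 \in s' by rewrite -Hmem mem_nth.
have al : (index y1 s' < size s')%N by rewrite index_mem.
have bl : (index y2 s' < size s')%N by rewrite index_mem.
have na : nth set0 s' (index y1 s') = y1 by apply: nth_index.
have nb : nth set0 s' (index y2 s') = y2 by apply: nth_index.
have y12 : y1 != y2.
  apply: D; last by [].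
  by rewrite (leq_ltn_trans (leq_pred _)).
have y1x : y1 != x by rewrite -nj; apply: D => //; rewrite prednK.
have y2x : x != y2 by rewrite -nj; apply: D.
have a0 : index y1 s' != 0%N.
  by apply/eqP => Ha; move: na; rewrite Ha => Hn; move: y1x; rewrite -Hn eqxx.
have b0 : index y2 s' != 0%N.
  by apply/eqP => Ha; move: nb; rewrite Ha => Hn; move: y2x; rewrite -Hn eqxx.
have ab : index y1 s' != index y2 s'.
  by apply/eqP => Hab; move: y12; rewrite -na -nb Hab eqxx.
case: (ltnP 1 (index y1 s')) => Ha.
  have := J' 0%N _ Ha al; rewrite na setIC => Hc; by move: I1; rewrite Hc eqxx.
have a1 : index y1 s' = 1%N by apply/eqP; rewrite eqn_leq Ha lt0n a0.
have Hb : (1 < index y2 s')%N.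
  rewrite ltn_neqAle lt0n b0 andbT; apply: contra ab => /eqP <-; by rewrite a1.
have := J' 0%N _ Hb bl; rewrite nb => Hc; by move: I2; rewrite Hc eqxx.
Qed.


Lemma count_PL m (E : {set {set V}}) (S : {set m.-tuple {set V}}) : (0 < m)%N ->
  (forall t, t \in S -> PL t /\ forall x, x \in t -> x \in E) ->
  (#|S| <= 2 * 'C(#|E|, m))%N.
Proof.
move=> Hm HS.
pose f := fun t : m.-tuple {set V} => [set x in t].
have H1 : forall P, (#|[set t in S | f t == P]| <= 2)%N.
  move=> P; set F := [set t in S | f t == P].
  case: (set_0Vmem F) => [->|[t0 Ht0]]; first by rewrite cards0.
  have memF : forall t, t \in F -> t \in S /\ f t = P.
    by move=> t; rewrite inE => /andP [? /eqP].
  have eqmem : forall t1 t2, t1 \in F -> t2 \in F -> (t1 : seq _) =i t2.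
    move=> t1 t2 /memF [_ E1] /memF [_ E2] x.
    have : f t1 = f t2 by rewrite E1 E2.
    by move/setP => /(_ x); rewrite !inE.
  have inj : {in F &, injective (fun t : m.-tuple {set V} => nth set0 t 0)}.
    move=> t1 t2 H1 H2 E0; apply: val_inj => /=.
    apply: PL_start => //.
    - by have [/memF [/HS [] ]] := (H1, H2).
    - by have [_ /memF [/HS [] ]] := (H1, H2).
    - by rewrite !size_tuple.
    - exact: eqmem.
  rewrite -(card_in_imset inj).
  apply: (leq_trans (subset_leq_card (_ : _ \subset [set nth set0 t0 0; nth set0 t0 (size t0).-1]))).
    apply/subsetP => y /imsetP [t Ht ->].
    apply: PL_end.
    - by have [/memF [/HS [] ]] := (Ht0, Ht).
    - by have [_ /memF [/HS [] ]] := (Ht0, Ht).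
    - by rewrite !size_tuple.
    - exact: eqmem.
    - by rewrite size_tuple.
  by rewrite cards2; case: (_ != _).
have H2 : f @: S \subset [set B : {set {set V}} | B \subset E & #|B| == m].
  apply/subsetP => P /imsetP [t Ht ->]; have [[D _] HE] := HS t Ht.
  rewrite inE; apply/andP; split.
    by apply/subsetP => x; rewrite inE; apply: HE.
  rewrite cardsE; apply/eqP.
  rewrite -{2}(size_tuple t).
  apply/card_uniqP; apply/(uniqP set0) => i j; rewrite !inE => Hi Hj Hij.
  apply/eqP; case: (ltngtP i j) => // Hl.
  - by move: (D _ _ Hl Hj); rewrite Hij eqxx.
  - by move: (D _ _ Hl Hi); rewrite Hij eqxx.
rewrite -(cards_draws E m) in H2 *.
apply: (leq_trans _ (leq_mul (leqnn 2) (subset_leq_card H2))).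
rewrite -sum1_card (partition_big f (mem (f @: S))); last first.
  by move=> t Ht; apply: imset_f.
rewrite mulnC -sum_nat_const; apply: leq_sum => P _.
apply: leq_trans (H1 P); rewrite -sum1_card; apply: eq_leq; apply: eq_bigl => t.
by rewrite inE.
Qed.

End Comb.
Arguments PL {V} s.

Lemma PL_geo (V : finType) (s : seq {set V}) (sigma : V -> R) (Ins : nat -> V -> Prop) :
 (forall i j v u, (i < j)%N -> Ins i v -> Ins j u -> (sigma v < sigma u)%R) ->
 (forall i, (i < size s)%N -> exists w, isLast sigma (nth set0 s i) w /\
     ((i.+1 < size s)%N -> isFirst sigma (nth set0 s i.+1) w) /\ Ins i w) ->
 PL s.
Proof.
move=> Hord Hw; split; [|split].
- move=> i j Hij Hj; apply/eqP => Heq.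
  have [wi [[wiin HLi] [_ Ii]]] := Hw i (ltn_trans Hij Hj).
  have [wj [[wjin HLj] [_ Ij]]] := Hw j Hj.
  have := Hord _ _ _ _ Hij Ii Ij.
  have := HLi wj; rewrite Heq => /(_ wjin); lra.
- move=> i Hi.
  have [wi [[wiin HLi] [HF _]]] := Hw i (ltn_trans (ltnSn _) Hi).
  have [win _] := HF Hi.
  by apply/set0Pn; exists wi; rewrite inE wiin win.
- move=> i j Hij Hj; apply/eqP; apply/negPn/negP => /set0Pn [x].
  rewrite inE => /andP [xi xj].
  have j0 : (0 < j)%N by apply: leq_ltn_trans Hij.
  have Hi' : (i < j.-1)%N by rewrite -ltnS prednK.
  have [wi [[wiin HLi] [_ Ii]]] := Hw i (ltn_trans (ltnSn _) (ltn_trans Hij Hj)).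
  have [wj [_ [HF Ij]]] := Hw j.-1 (leq_ltn_trans (leq_pred _) Hj).
  rewrite prednK in HF => //.
  have [_ HFj] := HF Hj.
  have := Hord _ _ _ _ Hi' Ii Ij.
  have := HLi x xi; have := HFj x xj; lra.
Qed.

Lemma in_intP a b x : Pilot.Defs.in_int a b x -> (a <= x < b)%R.
Proof. by rewrite /Pilot.Defs.in_int /Rleb /Rltb; case: Rle_dec; case: Rlt_dec. Qed.

Lemma inDelta_aa (V : finType) r n sigma i (v : V) : inDelta r n sigma i v -> (0 < aa r n)%R.
Proof.
move=> /in_intP; rewrite /DeltaL /DeltaR; nra.
Qed.

Lemma insmall_lt (V : finType) r n sigma i j (v u : V) : (0 <= aa r n)%R -> (i < j)%N ->
  insmall r n sigma i v -> insmall r n sigma j u -> (sigma v < sigma u)%R.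
Proof.
move=> Ha Hij /in_intP Hv /in_intP Hu.
move: Hv Hu; rewrite /deltaL /deltaR /DeltaR => Hv Hu.
have Hb : (0 < bb r n)%R by nra.
have Hij' : (INR i + 1 <= INR j)%R by rewrite -S_INR; apply: le_INR; apply/leP.
have Hi0 : (0 <= INR i)%R by apply: pos_INR.
have h1 : (0 <= (INR j - INR i) * aa r n)%R by apply: Rmult_le_pos; lra.
have h2 : (0 <= (INR j - INR i - 1) * bb r n)%R by apply: Rmult_le_pos; lra.
nra.
Qed.

Theorem lemma6 (V : finType) (E : {set {set V}}) (n r k : nat) (A : {set V}) :
  (2 <= n)%N ->
  (forall e, e \in E -> #|e| = n) ->
  (2 <= r)%N ->
  A \in E ->
  (2 <= k <= r)%N ->
  forall S : {set (k.-1).-tuple {set V}},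
    (forall t, t \in S ->
       (forall j : 'I_(k.-1), tnth t j \in E) /\
       exists sigma : V -> R,
         injective sigma /\
         (forall v, (0 <= sigma v < 1)%R) /\
         exists Vs : nat -> {set V},
           (forall i, (1 <= i <= r - 1)%N ->
              forall v, v \in Vs i -> inDelta r n sigma i v) /\
           complex_chain E r n sigma k (fun j => nth set0 t j.-1) A Vs) ->
    (#|S| <= 2 * 'C(#|E|, k.-1))%N.
Proof.
move=> _ _ _ _ /andP [Hk Hkr] S HS.
apply: count_PL; first by rewrite -ltnS prednK // (ltn_trans _ Hk).
move=> t /HS [HE [sigma [_ [_ [Vs [_ [Hch _]]]]]]].
split; last by move=> x /tnthP [j ->]; apply: HE.
have [_ [[v0 [_ HD]] [Hmid _]]] := Hch.
have Ha : (0 <= aa r n)%R by apply: Rlt_le; apply: inDelta_aa HD.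
have k0 : (0 < k)%N by apply: ltn_trans Hk.
apply: (@PL_geo V _ sigma (fun i w => insmall r n sigma (r - k + i.+1) w)).
  move=> i j v u Hij; apply: insmall_lt => //.
  by rewrite ltn_add2l ltnS.
rewrite size_tuple => i Hi.
have ik : (i.+1 < k)%N by rewrite -(prednK k0).
have Hk1 : (0 < i.+1 <= k - 1)%N by rewrite subn1 /= Hi.
have [w [HL [HF [Hs _]]]] := Hmid _ Hk1.
exists w; split; last split => //.
- by move: HL; rewrite (ltn_eqF ik).
- move=> Hi2; move: HF; have ik2 : (i.+2 < k)%N by rewrite -(prednK k0).
  by rewrite (ltn_eqF ik2).
Qed.
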